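(* Let $A$ be a finite alphabet. Every sequence $(w_n)_{n\ge0}$ of words over $A$ admits an adequate subsequence.
   Context: For $B\subseteq A$, let $B^{=}=\{w\in B^*:\mathrm{alph}(w)=B\}$ (words whose set of letters is exactly $B$). A factorization pattern is $(\vec u,\vec B)$ with $\vec u=(u_0,\dots,u_p)\in(A^* )^{p+1}$ and $\vec B=(B_1,\dots,B_p)$ nonempty subsets of $A$, $p\ge0$. For $n\ge0$ let $L_n(\vec u,\vec B)=u_0(B_1^{=})^nu_1(B_2^{=})^nu_2\cdots u_{p-1}(B_p^{=})^nu_p$. A sequence $(w_n)_n$ is $(\vec u,\vec B)$-adequate if $w_n\in L_n(\vec u,\vec B)$ for all $n\ge0$, and adequate if it is $(\vec u,\vec B)$-adequate for some factorization pattern $(\vec u,\vec B)$. *)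

(* Defs.v *)
From mathcomp Require Import all_boot.
Set Implicit Arguments. Unset Strict Implicit. Unset Printing Implicit Defensive.

Section Words.
Variable A : finType.

Definition alph (w : seq A) : {set A} := [set x in w].

Definition inBeq (B : {set A}) (w : seq A) : Prop := alph w = B.

Definition inBeqPow (B : {set A}) (n : nat) (w : seq A) : Prop :=
  exists vs : seq (seq A),
    size vs = n /\ (forall v, v \in vs -> inBeq B v) /\ w = flatten vs.

(* A factorization pattern ((u_0,...,u_p),(B_1,...,B_p)) is encoded as
   u_0 together with the list [:: (B_1,u_1); ...; (B_p,u_p)]. *)
Definition pattern := (seq A * seq ({set A} * seq A))%type.

Definition pattern_ok (P : pattern) : Prop :=
  forall Bu, Bu \in P.2 -> Bu.1 != set0.

Fixpoint inLtail (n : nat) (ps : seq ({set A} * seq A)) (w : seq A) : Prop :=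
  match ps with
  | [::] => w = [::]
  | (B, u) :: ps' =>
      exists v r, w = v ++ u ++ r /\ inBeqPow B n v /\ inLtail n ps' r
  end.

(* membership in L_n(u, B) = u_0 (B_1^=)^n u_1 ... (B_p^=)^n u_p *)
Definition inL (n : nat) (P : pattern) (w : seq A) : Prop :=
  exists r, w = P.1 ++ r /\ inLtail n P.2 r.

Definition adequate_for (P : pattern) (ws : nat -> seq A) : Prop :=
  forall n, inL n P (ws n).

Definition adequate (ws : nat -> seq A) : Prop :=
  exists P : pattern, pattern_ok P /\ adequate_for P ws.

End Words.

(* Main.v *)
Require Import Defs.
From mathcomp Require Import all_boot.
From mathcomp Require Import zify.
From Stdlib Require Import Classical ClassicalEpsilon Lia.
Set Implicit Arguments. Unset Strict Implicit. Unset Printing Implicit Defensive.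

Section W.
Variable A : finType.
Implicit Types (B C : {set A}) (u v w x : seq A).

Lemma alph_cat u v : alph (u ++ v) = alph u :|: alph v.
Proof. by apply/setP => c; rewrite !inE mem_cat. Qed.
Lemma alph_nil : alph ([::] : seq A) = set0.
Proof. by apply/setP => c; rewrite !inE. Qed.
Lemma alph_cons c u : alph (c :: u) = c |: alph u.
Proof. by apply/setP => d; rewrite !inE. Qed.
Lemma in_alph c u : (c \in alph u) = (c \in u).
Proof. by rewrite inE. Qed.

Lemma beq0 B : inBeqPow B 0 [::].
Proof. by exists [::]. Qed.

Lemma beq1 B v : inBeqPow B 1 v <-> alph v = B.
Proof.
split.
- case=> vs [Hs [H ->]]; case: vs Hs H => [|v1 [|v2 vs]] //= _ H.
  by rewrite cats0; apply: H; exact: mem_head.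
- move=> H; exists [:: v]; split=> //; split; last by rewrite /= cats0.
  by move=> v'; rewrite inE => /eqP ->.
Qed.

Lemma beq_cat B a b u v : inBeqPow B a u -> inBeqPow B b v -> inBeqPow B (a + b) (u ++ v).
Proof.
case=> [vs [<- [H1 ->]]] [vs' [<- [H2 ->]]]; exists (vs ++ vs'); split; first by rewrite size_cat.
split; last by rewrite flatten_cat.
by move=> z; rewrite mem_cat => /orP [/H1|/H2].
Qed.

Lemma beq_split B a b w : inBeqPow B (a + b) w ->
  exists u v, w = u ++ v /\ inBeqPow B a u /\ inBeqPow B b v.
Proof.
case=> [vs [Hs [H ->]]]; exists (flatten (take a vs)), (flatten (drop a vs)).
split; first by rewrite -flatten_cat cat_take_drop.
split.
- exists (take a vs); split; first by rewrite size_take Hs; case: ltnP => // H'; lia.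
  by split=> // z /mem_take /H.
- exists (drop a vs); split; first by rewrite size_drop Hs addKn.
  by split=> // z /mem_drop /H.
Qed.

Lemma beq_prepend B n q v : 0 < n -> alph q \subset B -> inBeqPow B n v -> inBeqPow B n (q ++ v).
Proof.
move=> n0 Hq [[|v1 vs] [Hs [H ->]]]; first by rewrite -Hs in n0.
exists ((q ++ v1) :: vs); split=> //; split; last by rewrite /= catA.
move=> z; rewrite inE => /orP [/eqP ->|Hz]; last by apply: H; rewrite inE Hz orbT.
have H1 : alph v1 = B := H v1 (mem_head _ _).
by rewrite /inBeq alph_cat H1; apply/setUidPr.
Qed.

Lemma beq_append B n p v : 0 < n -> alph p \subset B -> inBeqPow B n v -> inBeqPow B n (v ++ p).
Proof.
move=> n0 Hp [vs [Hs [H ->]]].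
case/lastP: vs Hs H => [|vs vl] Hs H; first by rewrite -Hs in n0.
exists (rcons vs (vl ++ p)); split; first by rewrite !size_rcons in Hs *.
split; last by rewrite !flatten_rcons catA.
move=> z; rewrite mem_rcons inE => /orP [/eqP ->|Hz]; last by apply: H; rewrite mem_rcons inE Hz orbT.
have H1 : alph vl = B by apply: H; rewrite mem_rcons mem_head.
by rewrite /inBeq alph_cat H1; apply/setUidPl.
Qed.

Lemma alph_flatten_eq B vs : vs != [::] -> (forall v, v \in vs -> inBeq B v) -> alph (flatten vs) = B.
Proof.
elim: vs => [|v vs IH] //= _ H.
rewrite alph_cat (H v (mem_head _ _)).
case: vs IH H => [|v' vs'] IH H; first by rewrite /= alph_nil setU0.
rewrite IH //; first exact: setUid.
by move=> z Hz; apply: H; rewrite inE Hz orbT.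
Qed.

Lemma beq_mono B N n v : 0 < n -> n <= N -> inBeqPow B N v -> inBeqPow B n v.
Proof.
move=> n0 nN [vs [Hs [H ->]]].
exists (rcons (take n.-1 vs) (flatten (drop n.-1 vs))); split.
  rewrite size_rcons size_take Hs; have -> : n.-1 < N by rewrite (leq_trans _ nN) // prednK.
  by rewrite prednK.
split; last by rewrite flatten_rcons -flatten_cat cat_take_drop.
move=> z; rewrite mem_rcons inE => /orP [/eqP ->|/mem_take /H //].
apply: alph_flatten_eq; last by move=> y /mem_drop /H.
rewrite -size_eq0 size_drop Hs subn_eq0 -ltnNge.
by rewrite (leq_trans _ nN) // prednK.
Qed.


Lemma inL_nil n u0 w : inL n (u0, [::]) w <-> w = u0.
Proof.
split; first by case=> r [-> /= ->]; rewrite cats0.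
by move=> ->; exists [::]; rewrite cats0.
Qed.

Lemma inL_cons n u0 B u ps w : inL n (u0, (B,u)::ps) w <->
  exists v z, w = u0 ++ v ++ z /\ inBeqPow B n v /\ inL n (u, ps) z.
Proof.
split.
- case=> r [-> /= [v [r' [-> [Hv Ht]]]]]; exists v, (u ++ r'); split=> //; split=> //.
  by exists r'.
- case=> v [z [-> [Hv [r' [-> Ht]]]]]; exists (v ++ u ++ r'); split=> //.
  by exists v, r'.
Qed.

Lemma inLtail_mono N n ps w : 0 < n -> n <= N -> inLtail N ps w -> inLtail n ps w.
Proof.
move=> n0 nN; elim: ps w => [|[B u] ps IH] w //= [v [r [-> [Hv Hr]]]].
exists v, r; split=> //; split; [exact: beq_mono Hv | exact: IH].
Qed.

Lemma inL_mono N n P w : 0 < n -> n <= N -> inL N P w -> inL n P w.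
Proof. by move=> n0 nN [r [-> H]]; exists r; split=> //; exact: inLtail_mono H. Qed.

Fixpoint pcat_aux (u0 : seq A) (ps : seq ({set A} * seq A)) (m : seq A) (Q : pattern A) : pattern A :=
  match ps with
  | [::] => (u0 ++ m ++ Q.1, Q.2)
  | (B,u) :: ps' => let R := pcat_aux u ps' m Q in (u0, (B, R.1) :: R.2)
  end.

Definition pcat (P : pattern A) m Q := pcat_aux P.1 P.2 m Q.

Lemma pcat_ok P m Q : pattern_ok P -> pattern_ok Q -> pattern_ok (pcat P m Q).
Proof.
case: P => u0 ps; rewrite /pcat /pattern_ok /=.
elim: ps u0 => [|[B u] ps IH] u0 /= HP HQ //.
move=> Bu; rewrite inE => /orP [/eqP -> /=|].
  by apply: (HP (B,u)); exact: mem_head.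
apply: IH => // Bu' H; apply: HP; rewrite inE H orbT //.
Qed.

Lemma inL_pcat n P m Q x y : inL n P x -> inL n Q y -> inL n (pcat P m Q) (x ++ m ++ y).
Proof.
case: P => u0 ps; rewrite /pcat /=.
elim: ps u0 x => [|[B u] ps IH] u0 x /=.
- move/inL_nil => -> [r [-> Hr]]; exists r; split=> //; by rewrite !catA.
- move/inL_cons => [v [z [-> [Hv Hz]]]] Hy.
  apply/inL_cons; exists v, (z ++ m ++ y); split; first by rewrite !catA.
  split=> //; rewrite -surjective_pairing; exact: IH.
Qed.

Definition HA (v : nat -> seq A) :=
  forall k, exists P : pattern A, pattern_ok P /\ forall n, inL n P (v (k + n)).

Definition Good (w : nat -> seq A) :=
  exists phi : nat -> nat, (forall n, phi n < phi n.+1) /\ HA (fun n => w (phi n)).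

Lemma incr_ge (psi : nat -> nat) : (forall n, psi n < psi n.+1) -> forall k n, psi k + n <= psi (k + n).
Proof.
move=> H k; elim=> [|n IH]; first by rewrite !addn0.
by rewrite addnS (leq_ltn_trans IH) // addnS.
Qed.

Lemma HA_sub (v : nat -> seq A) psi : (forall n, psi n < psi n.+1) -> HA v -> HA (fun n => v (psi n)).
Proof.
move=> Hpsi H k; case: (H (psi k)) => P [HP HL]; exists P; split=> //.
move=> n; have Hge := incr_ge Hpsi k n.
have E : psi (k + n) = psi k + (psi (k + n) - psi k) by rewrite subnKC // (leq_trans (leq_addr _ _) Hge).
case: n Hge E => [|n] Hge E; first by rewrite addn0; move: (HL 0); rewrite addn0.
have HN := HL (psi (k + n.+1) - psi k); rewrite -E in HN.
apply: (inL_mono _ _ HN) => //.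
by rewrite leq_subRL // (leq_trans (leq_addr _ _) Hge).
Qed.

Lemma HA_ext (v v' : nat -> seq A) : (forall n, v n = v' n) -> HA v -> HA v'.
Proof. by move=> E H k; case: (H k) => P [HP HL]; exists P; split=> // n; rewrite -E. Qed.

Lemma Good_sub (w : nat -> seq A) psi : (forall n, psi n < psi n.+1) -> Good (fun n => w (psi n)) -> Good w.
Proof.
move=> Hpsi [phi [Hphi H]]; exists (fun n => psi (phi n)); split=> //.
have Hm := homo_ltn (f := psi) (r := fun a b => a < b) (fun a b c => @ltn_trans a b c) Hpsi.
by move=> n; apply: Hm.
Qed.

Lemma HA_cat (x r : nat -> seq A) (a : seq A) : HA x -> HA r -> HA (fun n => x n ++ a ++ r n).
Proof.
move=> Hx Hr k; case: (Hx k) => P [HP HLP]; case: (Hr k) => Q [HQ HLQ].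
exists (pcat P a Q); split; first exact: pcat_ok.
by move=> n; apply: inL_pcat.
Qed.

Definition Sp C (s : seq A) : seq ({set A} * seq A) :=
  [seq (C, [:: c]) | c <- s] ++ [:: (C, [::])].

Lemma Sp_ok C s : C != set0 -> pattern_ok ([::], Sp C s).
Proof.
move=> HC Bu; rewrite /= mem_cat => /orP [/mapP [c _ ->] //|]; by rewrite inE => /eqP ->.
Qed.

Lemma Sp0 C s : inL 0 ([::], Sp C s) s.
Proof.
exists s; split=> //; elim: s => [|c s IH] /=.
- by exists [::], [::]; split=> //; split=> //; exact: beq0.
- by exists [::], s; split=> //; split=> //; exact: beq0.
Qed.

Lemma Sp_spread C n s : 0 < n -> alph s \subset C ->
  forall q t, alph q \subset C -> inBeqPow C ((size s).+1 * n.+1) t -> inLtail n (Sp C s) (q ++ t).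
Proof.
move=> n0; elim: s => [|c s IH] Hs q t Hq Ht /=.
- exists (q ++ t), [::]; split; first by rewrite cats0.
  split=> //; apply: beq_prepend => //; apply: (beq_mono n0 (leqnSn n)).
  by rewrite mul1n in Ht.
- rewrite mulSn in Ht; case/beq_split: Ht => t1 [t2 [-> [H1 H2]]].
  rewrite -addn1 in H1; case/beq_split: H1 => t0 [be [-> [H0 /beq1 Hbe]]].
  have cC : c \in C by apply: (subsetP Hs); rewrite alph_cons !inE eqxx.
  have cbe : c \in be by rewrite -in_alph Hbe.
  case/splitPr: cbe Hbe => p q' Hbe.
  have Hp : alph p \subset C by rewrite -Hbe alph_cat subsetUl.
  have Hq' : alph q' \subset C.
    by rewrite -Hbe alph_cat alph_cons; apply/subsetP => z Hz; rewrite !inE in Hz *; rewrite Hz !orbT.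
  exists (q ++ t0 ++ p), (q' ++ t2); split; first by rewrite -!catA.
  split; first by apply: beq_prepend => //; apply: beq_append.
  apply: IH => //; apply: subset_trans Hs; rewrite alph_cons; exact: subsetUr.
Qed.

Definition inf (P : nat -> Prop) := forall m, exists i, m <= i /\ P i.

Lemma extract P : inf P -> exists psi : nat -> nat, (forall n, psi n < psi n.+1) /\ forall n, P (psi n).
Proof.
move=> H.
pose g m := proj1_sig (constructive_indefinite_description _ (H m)).
have Hg m : m <= g m /\ P (g m) := proj2_sig (constructive_indefinite_description _ (H m)).
pose psi := fix f n := match n with 0 => g 0 | n'.+1 => g (f n').+1 end.
exists psi; split.
- by move=> n /=; exact: (Hg _).1.
- by case=> [|n] /=; exact: (Hg _).2.
Qed.

Lemma pigeon (T : finType) (Q : nat -> T -> Prop) :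
  (forall i, exists t, Q i t) -> exists t, inf (fun i => Q i t).
Proof.
move=> H; apply: NNPP => Hn.
have H' : forall t, exists m, forall i, m <= i -> ~ Q i t.
  move=> t; apply: NNPP => Hm; apply: Hn; exists t => m; apply: NNPP => Hc.
  by apply: Hm; exists m => i Hi HQ; apply: Hc; exists i.
pose m t := proj1_sig (constructive_indefinite_description _ (H' t)).
have Hm t : forall i, m t <= i -> ~ Q i t := proj2_sig (constructive_indefinite_description _ (H' t)).
case: (H (\max_(t : T) m t)) => t Ht.
by apply: (Hm t _ _ Ht); exact: leq_bigmax.
Qed.

Lemma first_block C u : C \subset alph u -> C != set0 ->
  exists x a r, u = x ++ a :: r /\ C \subset alph (x ++ [:: a]) /\ ~~ (C \subset alph x).
Proof.
move=> + HC; elim/last_ind: u => [|u c IH].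
  by rewrite alph_nil subset0 (negbTE HC).
case: (boolP (C \subset alph u)) => Hu Hc.
- case: (IH Hu) => x [a [r [-> H]]]; exists x, a, (rcons r c); split=> //.
  by rewrite rcons_cat rcons_cons.
- by exists u, c, [::]; rewrite cats1.
Qed.

Lemma Good_nil (w : nat -> seq A) : (forall i, w i = [::]) -> Good w.
Proof.
move=> H; exists id; split=> // k; exists ([::], [::]); split=> // n.
by apply/inL_nil; rewrite H.
Qed.

Lemma unbounded C (w : nat -> seq A) : C != set0 -> (forall i, alph (w i) \subset C) ->
  (forall M i0, exists i, i0 < i /\ inBeqPow C M.+1 (w i)) -> Good w.
Proof.
move=> HC Hw U.
pose f M i0 := proj1_sig (constructive_indefinite_description _ (U M i0)).
have Hf M i0 : i0 < f M i0 /\ inBeqPow C M.+1 (w (f M i0)) :=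
  proj2_sig (constructive_indefinite_description _ (U M i0)).
pose bnd m k := (\max_(i < m.+1) size (w i)).+1 * k.+2.
pose psi := fix g k := match k with 0 => 0 | k'.+1 => f (bnd (g k') k') (g k') end.
have Hpsi : forall n, psi n < psi n.+1 by move=> n /=; exact: (Hf _ _).1.
exists psi; split=> // j.
exists ([::], Sp C (w (psi j))); split; first exact: Sp_ok.
case=> [|n]; first by rewrite addn0; exact: Sp0.
have Ht : inBeqPow C (bnd (psi (j + n)) (j + n)).+1 (w (psi (j + n.+1))).
  by rewrite addnS /=; exact: (Hf _ _).2.
exists (w (psi (j + n.+1))); split=> //.
rewrite -[w (psi (j + n.+1))]cat0s; apply: Sp_spread => //; first by rewrite alph_nil sub0set.
apply: (beq_mono _ _ Ht) => //.
have Hj : psi j < (psi (j + n)).+1 by rewrite ltnS (leq_trans (leq_addr n _) (incr_ge Hpsi j n)).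
apply: leqW; rewrite /bnd; apply: leq_mul; last by rewrite !ltnS leq_addl.
rewrite ltnS; apply: (leq_trans _ (leq_bigmax (Ordinal Hj))) => /=.
by [].
Qed.

Lemma bnd C : C != set0 ->
  (forall a, a \in C -> forall w : nat -> seq A, (forall i, alph (w i) \subset C :\ a) -> Good w) ->
  forall M (w : nat -> seq A), (forall i, alph (w i) \subset C) ->
    (forall i, ~ inBeqPow C M.+1 (w i)) -> Good w.
Proof.
move=> HC IHs; elim=> [|M IHM] w Hw HB.
- have H : forall i, exists c, c \in C /\ c \notin alph (w i).
    move=> i; have Hn : ~~ (C \subset alph (w i)).
      apply/negP => Hs; apply: (HB i); apply/beq1; apply/eqP; rewrite eqEsubset Hw Hs.
      by [].
    by case/subsetPn: Hn => c Hc1 Hc2; exists c.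
  case: (pigeon H) => c Hc; case: (extract Hc) => psi [Hpsi HP].
  apply: (Good_sub Hpsi); apply: (IHs c (HP 0).1) => i.
  apply/subsetP => z Hz; rewrite in_setD1 (subsetP (Hw _) _ Hz) andbT.
  by apply/eqP => E; move: (HP i).2; rewrite -E Hz.
- have H : forall i, exists b : bool, (alph (w i) == C) = b by move=> i; exists (alph (w i) == C).
  case: (pigeon H) => b Hb; case: (extract Hb) => psi [Hpsi HP].
  apply: (Good_sub Hpsi); case: b Hb HP => _ HP; last first.
    apply: IHM => // i Hi; move: (HP i) => /negbT/eqP; apply.
    by apply/beq1; apply: (beq_mono _ _ Hi).
  have HD : forall i, exists D : seq A * A * seq A,
      w (psi i) = D.1.1 ++ D.1.2 :: D.2 /\ D.1.2 \in C /\ alph D.1.1 \subset C :\ D.1.2 /\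
      alph D.2 \subset C /\ alph (D.1.1 ++ [:: D.1.2]) = C.
    move=> i; have Ei : alph (w (psi i)) = C by apply/eqP; exact: HP.
    case: (first_block (u := w (psi i)) (C := C)) => //; first by rewrite Ei.
    move=> x [a [r [Eu [H1 H2]]]]; exists (x, a, r) => /=.
    have Hsub : forall y, y \subset w (psi i) -> alph y \subset C.
      move=> y Hy; rewrite -Ei; apply/subsetP => z; rewrite !inE; exact: (subsetP Hy).
    have Hxa : alph (x ++ [:: a]) = C.
      apply/eqP; rewrite eqEsubset H1 andbT; apply: Hsub; apply/subsetP => z.
      rewrite mem_cat mem_seq1 => /orP [Hz|/eqP ->]; rewrite Eu mem_cat ?Hz //.
      by rewrite inE eqxx orbT.
    have aC : a \in C by rewrite -Hxa alph_cat !inE eqxx orbT.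
    have anx : a \notin alph x.
      apply/negP => Ha; move/negP: H2; apply; rewrite -Hxa alph_cat.
      by apply/subsetP => z; rewrite !inE => /orP [//|/eqP ->]; rewrite -in_alph.
    split=> //; split=> //; split; last split=> //.
    + apply/subsetP => z Hz; rewrite in_setD1; apply/andP; split.
        by apply/eqP => E; move: anx; rewrite -E Hz.
      by apply: (subsetP (Hsub x _)) => //; apply/subsetP => y Hy; rewrite Eu mem_cat Hy.
    + by apply: Hsub; apply/subsetP => y Hy; rewrite Eu mem_cat inE Hy !orbT.
  pose D i := proj1_sig (constructive_indefinite_description _ (HD i)).
  have HDi i := proj2_sig (constructive_indefinite_description _ (HD i)).
  have Ha : forall i, exists a : A, (D i).1.2 = a by move=> i; eexists.
  case: (pigeon Ha) => a0 Ha0; case: (extract Ha0) => psi2 [Hpsi2 HP2].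
  apply: (Good_sub Hpsi2).
  have a0C : a0 \in C by rewrite -(HP2 0); case: (HDi (psi2 0)) => _ [].
  have [phi3 [Hphi3 HX]] : Good (fun n => (D (psi2 n)).1.1).
    apply: (IHs a0 a0C) => i; rewrite -(HP2 i); by case: (HDi (psi2 i)) => _ [_ []].
  have [phi4 [Hphi4 HR]] : Good (fun n => (D (psi2 (phi3 n))).2).
    apply: IHM => i; first by case: (HDi (psi2 (phi3 i))) => _ [_ [_ []]].
    move=> Hr; case: (HDi (psi2 (phi3 i))) => E [_ [_ [_ Hxa]]].
    apply: (HB (psi (psi2 (phi3 i)))); rewrite E -cat1s catA.
    by rewrite -addn1 addnC; apply: beq_cat => //; apply/beq1.
  exists (fun n => phi3 (phi4 n)); split.
    have Hm := homo_ltn (f := phi3) (r := fun a b => a < b) (fun a b c => @ltn_trans a b c) Hphi3.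
    by move=> n; apply: Hm.
  have HX' := HA_sub Hphi4 HX.
  apply: (HA_ext _ (HA_cat [:: a0] HX' HR)) => n /=.
  case: (HDi (psi2 (phi3 (phi4 n)))) => E _; rewrite -(HP2 (phi3 (phi4 n))); exact: (esym E).
Qed.

Lemma main k : forall C : {set A}, #|C| <= k ->
  forall w : nat -> seq A, (forall i, alph (w i) \subset C) -> Good w.
Proof.
elim: k => [|k IH] C HC w Hw.
  apply: Good_nil => i; move: (Hw i); rewrite leqn0 cards_eq0 in HC.
  rewrite (eqP HC); case: (w i) => [//|c s]; rewrite subset0 alph_cons => /eqP E.
  by move: (setU11 c (alph s)); rewrite E inE.
case: (eqVneq C set0) => [E|HC0].
  apply: Good_nil => i; move: (Hw i); rewrite E.
  case: (w i) => [//|c s]; rewrite subset0 alph_cons => /eqP E'.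
  by move: (setU11 c (alph s)); rewrite E' inE.
have IHs : forall a, a \in C -> forall w : nat -> seq A, (forall i, alph (w i) \subset C :\ a) -> Good w.
  move=> a aC w' Hw'; apply: (IH (C :\ a)) => //.
  by move: HC; rewrite (cardsD1 a C) aC add1n ltnS.
case: (classic (forall M i0, exists i, i0 < i /\ inBeqPow C M.+1 (w i))) => U.
  exact: (unbounded HC0 Hw U).
have [M [i0 HM]] : exists M i0, forall i, i0 < i -> ~ inBeqPow C M.+1 (w i).
  apply: NNPP => Hn; apply: U => M i0; apply: NNPP => Hn2; apply: Hn; exists M, i0 => i Hi Hb.
  by apply: Hn2; exists i.
apply: (Good_sub (psi := fun n => i0.+1 + n)); first by move=> n; rewrite addnS.
apply: (bnd HC0 IHs (M := M)) => i; first exact: Hw.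
by apply: HM; rewrite ltnS leq_addr.
Qed.

End W.

Theorem lemma3 (A : finType) (w : nat -> seq A) :
  exists phi : nat -> nat,
    (forall n, phi n < phi n.+1) /\ adequate (fun n => w (phi n)).
Proof.
case: (@main A #|[set: A]| [set: A] (leqnn _) w (fun i => subsetT _)) => phi [Hphi H].
exists phi; split=> //; case: (H 0) => P [HP HL]; exists P; split=> //.
Qed.
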